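(* Let $d,\ell,r,s\in\mathbb{N}$ with $d\ge\ell$, let $T\subseteq\mathbb{F}$ be a subset of size $n$, and let $r=s-\lfloor\frac{d-\ell}{n}\rfloor$. Let $Q,R\in\mathbb{F}[x]$ be univariate polynomials of degree at most $\ell$, and let $g\colon T\to\mathbb{F}_{<r}[z]$ and $w\colon T\times[r]\to\mathbb{Z}_{\ge0}$ be functions such that $w(a,i)\le\frac n2\big((s-i)-\frac{d-\ell}{n}\big)$ for every $(a,i)\in T\times[r]$. If $Q\ne R$, then \[\Gamma^{s,d,\ell}_w(g,Q)+\Gamma^{s,d,\ell}_w(g,R)\ge n^2\Big(s-\frac dn\Big).\]
   Context: $\mathbb{F}$ is a field, $[r]=\{0,1,\dots,r-1\}$, and $\mathbb{F}_{<r}[z]$ denotes polynomials of degree $<r$. For a polynomial $R$ of degree at most $\ell$, for $i\in[r+1]$ let $A_i(g,R)=\{a\in T:\max\{j\in[r+1]: g(a)\equiv R(a+z)\bmod\langle z\rangle^j\}=i\}$. Define \[\Gamma^{s,d,\ell}_w(g,R)=\sum_{i=0}^{r-1}\sum_{a\in A_i(g,R)}\max\Big\{n\Big((s-i)-\tfrac{d-\ell}{n}\Big)-w(a,i),\ \max_{j<i}w(a,j)\Big\}+\sum_{a\in A_r(g,R)}\max_{j<r}w(a,j),\] where a maximum over an empty index set is ignored (taken as $0$). *)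

(* Defs.v *)
From HB Require Import structures.
From mathcomp Require Import all_boot all_order all_algebra.
Set Implicit Arguments. Unset Strict Implicit. Unset Printing Implicit Defensive.
Import Order.TTheory GRing.Theory Num.Theory.
Local Open Scope ring_scope.

Definition shiftp (F : fieldType) (R : {poly F}) (a : F) : {poly F} :=
  R \Po ('X + a%:P).

Definition agree (F : fieldType) (r : nat) (g : F -> {poly F}) (R : {poly F})
  (a : F) : nat :=
  \max_(j < r.+1 | ('X^j %| (g a - shiftp R a))%R) (j : nat).

(* Gamma^{s,d,l}_w(g,R), with T given as a duplicate-free sequence,
   n = size T, and [r] = {0,...,r-1}.  Empty maxima are taken as 0. *)
Definition Gamma (F : fieldType) (s d l r : nat) (T : seq F)
  (w : F -> nat -> nat) (g : F -> {poly F}) (R : {poly F}) : rat :=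
  let n := (size T)%:R : rat in
  \sum_(i < r) \sum_(a <- T | agree r g R a == i)
     Num.max (n * ((s%:R - (i : nat)%:R) - (d%:R - l%:R) / n) - (w a i)%:R)
             ((\max_(j < i) w a j)%N)%:R
  + \sum_(a <- T | agree r g R a == r) ((\max_(j < r) w a j)%N)%:R.

(* Main.v *)
Require Import Defs.
From HB Require Import structures.
From mathcomp Require Import all_boot all_order all_algebra.
From mathcomp Require Import zify ring lra.
Import Order.TTheory GRing.Theory Num.Theory.
Local Open Scope ring_scope.

Lemma agree_dvd (F : fieldType) r g (R : {poly F}) a :
  ('X^(agree r g R a) %| (g a - shiftp R a))%R && (agree r g R a <= r)%N.
Proof.
rewrite /agree (bigop.bigmax_eq_arg (ord0 : 'I_r.+1)); last by rewrite expr0 dvd1p.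
case: arg_maxnP; first by rewrite expr0 dvd1p.
by move=> i Pi _; rewrite Pi -ltnS ltn_ord.
Qed.

Lemma agree_le (F : fieldType) r g (R : {poly F}) a : (agree r g R a <= r)%N.
Proof. by case/andP: (agree_dvd _ r g R a). Qed.

Lemma root_mult (F : fieldType) r g (Q R : {poly F}) a :
  ('X - a%:P) ^+ (minn (agree r g Q a) (agree r g R a)) %| Q - R.
Proof.
set m := minn _ _.
have h1 : 'X^m %| shiftp (Q - R) a.
  case/andP: (agree_dvd _ r g Q a) => hQ _; case/andP: (agree_dvd _ r g R a) => hR _.
  have e : shiftp (Q - R) a = (g a - shiftp R a) - (g a - shiftp Q a).
    by rewrite /shiftp comp_polyB; ring.
  rewrite e; apply: dvdp_sub.
    by apply: dvdp_trans hR; apply: dvdp_exp2l; exact: geq_minr.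
  by apply: dvdp_trans hQ; apply: dvdp_exp2l; exact: geq_minl.
case/dvdpP: h1 => q hq.
have := congr1 (comp_poly ('X - a%:P)) hq.
rewrite /shiftp comp_polyXaddC_K comp_polyM comp_Xn_poly => ->.
exact: dvdp_mulIr.
Qed.

Lemma count_roots (F : fieldType) (T : seq F) (m : F -> nat) (p : {poly F}) :
  uniq T -> p != 0 -> (forall a, a \in T -> ('X - a%:P) ^+ m a %| p) ->
  (\sum_(a <- T) m a < size p)%N.
Proof.
elim: T p => [|a T IH] p /=; first by rewrite big_nil size_poly_gt0.
case/andP=> aT uT pn0 hd.
have /dvdpP [q hq] := hd a (mem_head a T).
have qn0 : q != 0 by apply: contraNneq pn0 => q0; rewrite hq q0 mul0r.
have Hq : (\sum_(b <- T) m b < size q)%N.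
  apply: IH => // b bT.
  have := hd b (mem_behead (s:=a::T) bT); rewrite hq Gauss_dvdpl //.
  apply: coprimep_expl; apply: coprimep_expr; apply: coprimep_XsubC2.
  by rewrite subr_eq0; apply: contraNneq aT => ->.
rewrite big_cons hq size_mul ?expf_neq0 ?polyXsubC_eq0 // size_exp_XsubC.
by rewrite addnS /= addnC ltn_add2r.
Qed.
Definition cc (n s d l : nat) (i : nat) : rat :=
  n%:R * ((s%:R - i%:R) - (d%:R - l%:R) / n%:R).

Definition G (n s d l r : nat) (w : nat -> nat) (i : nat) : rat :=
  if (i < r)%N then Num.max (cc n s d l i - (w i)%:R) ((\max_(j < i) w j)%N)%:R
  else ((\max_(j < r) w j)%N)%:R.

Lemma Gamma_eq (F : fieldType) s d l r (T : seq F) w g (R : {poly F}) :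
  (forall a, agree r g R a <= r)%N ->
  Gamma s d l r T w g R =
  \sum_(a <- T) G (size T) s d l r (w a) (agree r g R a).
Proof.
move=> hle; rewrite /Gamma.
under eq_bigr do rewrite big_mkcond.
rewrite exchange_big /= [X in _ + X]big_mkcond -big_split /=.
apply: eq_bigr => a _; rewrite /G.
have := hle a; rewrite leq_eqVlt; case/orP => [/eqP e | lt].
  rewrite e eqxx ltnn big1 ?add0r // => i _.
  by rewrite (gtn_eqF (ltn_ord i)).
rewrite lt (ltn_eqF lt) addr0 -big_mkcond /=.
rewrite (eq_bigl (fun i : 'I_r => i == Ordinal lt)); last first.
  by move=> i; rewrite /= -(inj_eq val_inj) /= eq_sym.
by rewrite big_pred1_eq /cc.
Qed.

Lemma per (n s d l r : nat) (w : nat -> nat) i j :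
  (i <= r)%N -> (j <= r)%N ->
  (forall k, (k < r)%N -> ((w k)%:R : rat) <= n%:R / 2%:R * ((s%:R - k%:R) - (d%:R - l%:R) / n%:R)) ->
  cc n s d l r <= 0 ->
  cc n s d l (minn i j) <= G n s d l r w i + G n s d l r w j.
Proof.
move=> + + hw hr.
wlog ij : i j / (i <= j)%N.
  move=> H; move=> ir jr; have [ij|ji] := boolP (i <= j)%N; first exact: H.
  rewrite minnC addrC; apply: H => //; apply: ltnW; by rewrite ltnNge.
move=> ir jr; rewrite (minn_idPl ij).
have G0 : forall k, 0 <= G n s d l r w k.
  move=> k; rewrite /G; case: ifP => _; last by rewrite ler0n.
  by rewrite le_max ler0n orbT.
case: (ltnP i r) => ir'; last first.
  have -> : i = r by apply/eqP; rewrite eqn_leq ir ir'.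
  apply: le_trans hr _; apply: addr_ge0; exact: G0.
have hwi := hw i ir'.
have hcw : (w i)%:R <= cc n s d l i / 2%:R.
  suff -> : cc n s d l i / 2%:R = n%:R / 2%:R * ((s%:R - i%:R) - (d%:R - l%:R) / n%:R) by []; rewrite /cc; ring.
have Gi : cc n s d l i - (w i)%:R <= G n s d l r w i.
  by rewrite /G ir' le_max lexx.
have [e|lt] := eqVneq i j.
  rewrite -e; lra.
have ltij : (i < j)%N by rewrite ltn_neqAle lt ij.
have Gj : ((w i)%:R : rat) <= G n s d l r w j.
  have hm : (w i <= \max_(k < j) w k)%N.
    by apply: (leq_bigmax_cond (F := fun k : 'I_j => w k) (Ordinal ltij)).
  have hm' : (w i <= \max_(k < r) w k)%N.
    by apply: (leq_bigmax_cond (F := fun k : 'I_r => w k) (Ordinal ir')).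
  rewrite /G; case: ifP => _; last by rewrite ler_nat.
  by rewrite le_max ler_nat hm orbT.
lra.
Qed.

Lemma ccE (n s d l k : nat) : (0 < n)%N ->
  cc n s d l k = n%:R * s%:R - n%:R * k%:R - (d%:R - l%:R).
Proof.
move=> n0; have nz : (n%:R : rat) != 0 by rewrite pnatr_eq0 -lt0n.
by rewrite /cc; field.
Qed.

Lemma sum_cc (n s d l : nat) (F : fieldType) (T : seq F) (m : F -> nat) :
  (0 < n)%N ->
  \sum_(a <- T) cc n s d l (m a) =
  (size T)%:R * (n%:R * s%:R - (d%:R - l%:R)) - n%:R * (\sum_(a <- T) m a)%:R.
Proof.
move=> n0; elim: T => [|a T IH]; first by rewrite !big_nil mul0r mulr0 subr0.
rewrite !big_cons IH ccE // natrD /= -addn1 natrD; ring.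
Qed.

Theorem lemma6p2 (F : fieldType) (d l r s : nat) (T : seq F)
  (Q R : {poly F}) (g : F -> {poly F}) (w : F -> nat -> nat) :
  (l <= d)%N ->
  uniq T ->
  (0 < size T)%N ->
  (r + (d - l) %/ size T)%N = s ->
  (size Q <= l.+1)%N -> (size R <= l.+1)%N ->
  (forall a, a \in T -> (size (g a) <= r)%N) ->
  (forall a i, a \in T -> (i < r)%N ->
     ((w a i)%:R : rat) <= (size T)%:R / 2%:R *
        ((s%:R - i%:R) - (d%:R - l%:R) / (size T)%:R)) ->
  Q != R ->
  ((size T)%:R ^+ 2 : rat) * (s%:R - d%:R / (size T)%:R)
    <= Gamma s d l r T w g Q + Gamma s d l r T w g R.
Proof.
move=> hld uT nT hs hQ hR _ hw QR.
rewrite !Gamma_eq; try by move=> a; exact: agree_le.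
rewrite -big_split /=.
set m := fun a => minn (agree r g Q a) (agree r g R a).
have hm : (\sum_(a <- T) m a <= l)%N.
  have h : (\sum_(a <- T) m a < size (Q - R)%R)%N.
    apply: count_roots => //; first by rewrite subr_eq0.
    move=> a _; exact: root_mult.

  rewrite -ltnS; apply: leq_trans h _.
  apply: leq_trans (size_polyD _ _) _; rewrite size_polyN geq_max hQ hR.
  done.
have hr : cc (size T) s d l r <= 0.
  rewrite ccE // subr_le0 -hs natrD mulrDr.
  rewrite addrAC subrr add0r -natrM.
  rewrite -(natrB _ hld) ler_nat mulnC; exact: leq_divM.
apply: le_trans (_ : \sum_(a <- T) cc (size T) s d l (m a) <= _); last first.
  rewrite [X in X <= _]big_seq [X in _ <= X]big_seq.
  apply: ler_sum => a aT; apply: per => //; try exact: agree_le.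
  by move=> k kr; exact: (hw a k aT kr).
rewrite sum_cc //.
have nz : ((size T)%:R : rat) != 0 by rewrite pnatr_eq0 -lt0n.
have n0 : (0 : rat) < (size T)%:R by rewrite ltr0n.
have hm' : ((\sum_(a <- T) m a)%:R : rat) <= l%:R by rewrite ler_nat.
have -> : ((size T)%:R ^+ 2 : rat) * (s%:R - d%:R / (size T)%:R) =
   (size T)%:R * (size T)%:R * s%:R - (size T)%:R * d%:R by field.
nra.
Qed.
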